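(* Fix $\phi\in\mathbb{R}^d$ with $\mu=\|\phi\|^2>0$, a ground-truth class $y\in[V]$ with one-hot label ${\bm y}={\bm e}_y$, softmax cross-entropy $f({\bm z},{\bm y})=-\sum_k y_k\log p_k({\bm z})$ (with $L$ a uniform bound on the norms of its first three ${\bm z}$-derivatives), $\kappa\ge0$, and ${\bm W}^t\in\mathbb{R}^{V\times d}$. Let ${\bm z}^t={\bm W}^t\phi$, ${\bm p}^t=\mathrm{softmax}({\bm z}^t)$, ${\bm g}^t={\bm p}^t-{\bm y}$, ${\bm H}^t_{{\bm z}}=\mathrm{diag}({\bm p}^t)-{\bm p}^t({\bm p}^t)^\top$, and $y^*=\arg\max_{j\neq y}p_j^t$. For step size $\eta$ with $|\eta|\in(0,1]$ take $|\rho|=\kappa\sqrt{|\eta|}$, set $\eta'=\eta\mu$ and $\tilde\rho^{\,t}=\rho\sqrt\mu/\|{\bm g}^t\|$ ($0$ if ${\bm g}^t=0$), and assume the sign condition $\eta'\tilde\rho^{\,t}>0$. With $F({\bm W})=f({\bm W}\phi,{\bm y})$, define ${\bm W}^{t+1}(\mathrm{GD})={\bm W}^t-\eta\nabla F({\bm W}^t)$ and ${\bm W}^{t+1}(\mathrm{SAM})={\bm W}^t-\eta\nabla F({\bm W}^t+\rho\nabla F({\bm W}^t)/\|\nabla F({\bm W}^t)\|)$, and $\alpha_i^{(a)}=p_i^{t+1}(a)/p_i^t$ where ${\bm p}^{t+1}(a)=\mathrm{softmax}({\bm W}^{t+1}(a)\phi)$. Then there exists $\eta_0>0$, depending only on $({\bm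 p}^t,{\bm H}^t_{{\bm z}},\|{\bm g}^t\|,\mu,\kappa,L)$, such that for all $0<|\eta|\le\eta_0$, $$\alpha^{\mathrm{SAM}}_{y^*}\le\alpha^{\mathrm{GD}}_{y^*}.$$ Moreover, the inequality is strict whenever $p^t_{y^*}\in(0,1)$ and $\tilde\rho^{\,t}\neq0$, and equality holds when $\tilde\rho^{\,t}=0$.
   Context: $\|\cdot\|$ is Euclidean/Frobenius norm; $\nabla F({\bm W})=({\bm p}({\bm W}\phi)-{\bm y})\phi^\top$. $\alpha_i$ is the one-step confidence ratio of class $i$. *)

(* Defs.v *)
From HB Require Import structures.
From mathcomp Require Import all_boot all_order all_algebra.
From mathcomp Require Import reals sequences exp.
Set Implicit Arguments. Unset Strict Implicit. Unset Printing Implicit Defensive.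
Import Order.TTheory GRing.Theory Num.Theory.
Local Open Scope ring_scope.

Section Defs.
Variable R : realType.

Definition vnorm n (v : 'cV[R]_n) : R := Num.sqrt (\sum_i v i 0 ^+ 2).
Definition mnorm m n (A : 'M[R]_(m, n)) : R :=
  Num.sqrt (\sum_i \sum_j A i j ^+ 2).

Definition mu d (phi : 'cV[R]_d) : R := vnorm phi ^+ 2.

Definition softmax V (z : 'cV[R]_V) : 'cV[R]_V :=
  \col_i (expR (z i 0) / \sum_j expR (z j 0)).

Definition onehot V (y : 'I_V) : 'cV[R]_V := \col_i (i == y)%:R.

Definition hessz V (p : 'cV[R]_V) : 'M[R]_V := diag_mx p^T - p *m p^T.

(* gradient of F(W) = f(W phi, y):  (p(W phi) - y) phi^T *)
Definition gradF V d (phi : 'cV[R]_d) (y : 'I_V) (W : 'M[R]_(V, d))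
  : 'M[R]_(V, d) := (softmax (W *m phi) - onehot y) *m phi^T.

Definition normalize m n (A : 'M[R]_(m, n)) : 'M[R]_(m, n) :=
  if mnorm A == 0 then 0 else (mnorm A)^-1 *: A.

Definition gd_step V d (eta : R) (phi : 'cV[R]_d) (y : 'I_V)
  (W : 'M[R]_(V, d)) : 'M[R]_(V, d) := W - eta *: gradF phi y W.

Definition sam_step V d (eta rho : R) (phi : 'cV[R]_d) (y : 'I_V)
  (W : 'M[R]_(V, d)) : 'M[R]_(V, d) :=
  W - eta *: gradF phi y (W + rho *: normalize (gradF phi y W)).

Definition rhotilde V (rho muv : R) (g : 'cV[R]_V) : R :=
  if vnorm g == 0 then 0 else rho * Num.sqrt muv / vnorm g.

Definition alpha V d (phi : 'cV[R]_d) (W Wnext : 'M[R]_(V, d)) (i : 'I_V) : R :=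
  softmax (Wnext *m phi) i 0 / softmax (W *m phi) i 0.

End Defs.

(* Main.v *)
Require Import Defs.
From HB Require Import structures.
From mathcomp Require Import all_boot all_order all_algebra.
From mathcomp Require Import reals sequences exp.
From mathcomp Require Import ring lra boolp.
Import Order.TTheory GRing.Theory Num.Theory.
Local Open Scope ring_scope.
Set Implicit Arguments. Unset Strict Implicit. Unset Printing Implicit Defensive.
Section S.
Variable R : realType.
Lemma expR_1mx (x : R) : x < 1 -> expR x * (1 - x) <= 1.
Proof.
move=> hx. have h := expR_ge1Dx (- x).
have e := expRxMexpNx_1 x. have p := expR_gt0 x.
nra.
Qed.
Lemma expR_up (x : R) : 0 <= x <= 1/2 -> expR x <= 1 + 2 * x.
Proof. move=> /andP[h0 h1]. have := expR_1mx (x := x). have p := expR_gt0 x. nra. Qed.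
Lemma expR_err (x : R) : `|x| <= 1/2 -> 0 <= expR x - 1 - x <= 2 * x ^+ 2.
Proof.
move=> hx. have := expR_1mx (x := x). have p := expR_gt0 x. have := expR_ge1Dx x.
move: hx; rewrite ler_norml => /andP[h1 h2] h3 h4.
apply/andP; split; first lra. nra.
Qed.

Definition tilt V (p d : 'I_V -> R) (k : 'I_V) : R :=
  p k * expR (d k) / \sum_j p j * expR (d j).

Lemma sum_pos_cst V (p : 'I_V -> R) c : \sum_k p k = 1 -> \sum_k p k * c = c.
Proof. by move=> h; rewrite -mulr_suml h mul1r. Qed.

Lemma Z_bounds V (p d : 'I_V -> R) t : (forall k, 0 < p k) -> \sum_k p k = 1 ->
  (forall k, `|d k| <= t) ->
  expR (- t) <= \sum_j p j * expR (d j) <= expR t.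
Proof.
move=> pp ps hd; apply/andP; split.
- rewrite -{1}(sum_pos_cst (expR (-t)) ps); apply: ler_sum => k _.
  rewrite ler_pM2l // ler_expR. by have := hd k; rewrite ler_norml => /andP[].
- rewrite -(sum_pos_cst (expR t) ps); apply: ler_sum => k _.
  rewrite ler_pM2l // ler_expR. by have := hd k; rewrite ler_norml => /andP[].
Qed.

Lemma tilt_lip V (p d : 'I_V -> R) t : (forall k, 0 < p k) -> \sum_k p k = 1 ->
  0 <= t <= 1/4 -> (forall k, `|d k| <= t) ->
  forall k, `|tilt p d k - p k| <= 4 * t * p k.
Proof.
move=> pp ps /andP[t0 t1] hd k.
have /andP[Zl Zh] := Z_bounds pp ps hd.
set Z := \sum_j _ in Zl Zh *.
have et := expRxMexpNx_1 t.
have eup := expR_up (x := t). have eup2 := expR_1mx (x := t).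
have := expR_ge1Dx (- t).
have ep := expR_gt0 t. have enp := expR_gt0 (- t).
have := hd k; rewrite ler_norml => /andP[dk1 dk2].
have ek1 : expR (- t) <= expR (d k) by rewrite ler_expR.
have ek2 : expR (d k) <= expR t by rewrite ler_expR.
have Zp : 0 < Z by apply: lt_le_trans Zl.
have -> : tilt p d k - p k = p k * (expR (d k) / Z - 1).
  by rewrite /tilt -/Z; field; rewrite gt_eqF.
rewrite normrM gtr0_norm // mulrC ler_pM2r //.
set rr := expR (d k) / Z.
have hr : rr * Z = expR (d k) by rewrite /rr mulfVK // gt_eqF.
have e2 : expR t <= 1 + 2 * t by apply: eup; lra.
move=> h1t; rewrite ler_norml; apply/andP; split; nra.
Qed.
End S.
Section S2.
Variable R : realType.
Definition Cf V (p : 'I_V -> R) (y i : 'I_V) : R :=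
  p i * (p i - (i == y)%:R) - \sum_k p k ^+ 2 * (p k - (k == y)%:R)
  - (p i - \sum_k p k ^+ 2) * \sum_k p k * (p k - (k == y)%:R).

Lemma T_pos (q pi P2 : R) : 0 < q -> 0 < pi -> q + pi <= 1 ->
  q ^+ 2 + pi ^+ 2 <= P2 -> P2 <= q ^+ 2 + pi * (1 - q) ->
  0 < pi * (pi - (P2 - q)) - q * (q - 1 - (P2 - q)).
Proof.
move=> q0 p0 s1 l1 l2.
have [h|h] := leP q pi.
- have hs : P2 - q <= (1 - q) * (pi - q) by nra.
  have h3 : (P2 - q) * (q - pi) >= - ((1 - q) * (pi - q)) * (pi - q).
    have : 0 <= ((1 - q) * (pi - q) - (P2 - q)) * (pi - q) by apply: mulr_ge0; lra.
    nra.
  have h4 : (1 - q) * (pi - q) * (pi - q) <= (pi - q) * (pi + q).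
    have : 0 <= (pi - q) * ((pi + q) - (1 - q) * (pi - q)) by apply: mulr_ge0; nra.
    nra.
  nra.
- have h3 : (P2 - q) * (q - pi) >= (q ^+ 2 + pi ^+ 2 - q) * (q - pi).
    have : 0 <= (P2 - (q ^+ 2 + pi ^+ 2)) * (q - pi) by apply: mulr_ge0; lra.
    nra.
  have h5 : 0 < pi ^+ 2 * (1 + q - pi) by apply: mulr_gt0; [exact: exprn_gt0 | lra].
  have h6 : 0 <= q * (1 - q) * (1 - q + pi) by apply: mulr_ge0; [apply: mulr_ge0|]; lra.
  nra.
Qed.

Lemma Cf_pos V (p : 'I_V -> R) (y i : 'I_V) : (forall k, 0 < p k) -> \sum_k p k = 1 ->
  i != y -> (forall j, j != y -> p j <= p i) -> 0 < Cf p y i.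
Proof.
move=> pp ps iy hmax.
set P2 := \sum_k p k ^+ 2.
set s := \sum_k p k * (p k - (k == y)%:R).
have sE : s = P2 - p y.
  rewrite /s (eq_bigr (fun k => p k ^+ 2 - p k * (k == y)%:R)); last by move=> k _; ring.
  rewrite sumrB; congr (_ - _).
  by rewrite (bigD1 y) //= eqxx mulr1 big1 ?addr0 // => k /negbTE ->; rewrite mulr0.
have S1 : \sum_(k | k != y) p k = 1 - p y by move: ps; rewrite (bigD1 y) //=; lra.
have P2E : P2 = p y ^+ 2 + \sum_(k | k != y) p k ^+ 2 by rewrite /P2 (bigD1 y).
have P2up : \sum_(k | k != y) p k ^+ 2 <= p i * (1 - p y).
  rewrite -S1 mulr_sumr; apply: ler_sum => k ky.
  by rewrite expr2 ler_pM2r // hmax.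
have P2lo : p i ^+ 2 <= \sum_(k | k != y) p k ^+ 2.
  rewrite (bigD1 i) //= lerDl; apply: sumr_ge0 => k _; exact: sqr_ge0.
have qpi : p y + p i <= 1.
  have : p i <= \sum_(k | k != y) p k.
    rewrite (bigD1 i) //= lerDl; apply: sumr_ge0 => k _; exact: ltW.
  lra.
pose A k := p k * (p k - (k == y)%:R - s).
have SA : \sum_k p k * A k = \sum_k p k ^+ 2 * (p k - (k == y)%:R) - s * P2.
  by rewrite /P2 mulr_sumr -sumrB; apply: eq_bigr => k _; rewrite /A; ring.
have CE : Cf p y i = \sum_k p k * (A i - A k).
  rewrite (eq_bigr (fun k => A i * p k - p k * A k)); last by move=> k _; ring.
  rewrite sumrB -mulr_sumr ps mulr1 SA /Cf -/P2 -/s /A.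
  set T1 := \sum_k _ ^+ 2 * _. set b := ((i == y)%:R). ring.
rewrite CE (bigD1 y) //=.
have -> : A i - A y = p i * (p i - (P2 - p y)) - p y * (p y - 1 - (P2 - p y)).
  by rewrite /A eqxx (negbTE iy) sE /=; ring.
apply: ltr_pwDl.
  apply: mulr_gt0 => //; apply: T_pos => //; rewrite P2E; lra.
apply: sumr_ge0 => k ky; apply: mulr_ge0; first exact: ltW.
rewrite /A (negbTE iy) (negbTE ky) sE /= !subr0.
have hk := hmax k ky. have pk := pp k. have pyy := pp y. have pii := pp i.
have hP : P2 - p y <= p i + p k by rewrite P2E; nra.
have : 0 <= (p i - p k) * (p i + p k - (P2 - p y)) by apply: mulr_ge0; lra.
nra.
Qed.
End S2.
Section S3.
Variable R : realType.

Lemma Zpos V (p d : 'I_V -> R) (k : 'I_V) : (forall k, 0 < p k) -> 0 < \sum_j p j * expR (d j).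
Proof.
move=> pp; rewrite (bigD1 k) //=; apply: ltr_pwDl; first exact: (mulr_gt0 (pp k) (expR_gt0 _)).
by apply: sumr_ge0 => l _; apply: mulr_ge0; [apply: ltW | apply: expR_ge0].
Qed.

Lemma tilt_pos V (p d : 'I_V -> R) : (forall k, 0 < p k) -> forall k, 0 < tilt p d k.
Proof.
move=> pp k; rewrite /tilt; apply: divr_gt0; [exact: (mulr_gt0 (pp k) (expR_gt0 _)) | exact: (Zpos _ k)].
Qed.

Lemma tilt_sum1 V (p d : 'I_V -> R) (k : 'I_V) : (forall k, 0 < p k) -> \sum_k tilt p d k = 1.
Proof.
move=> pp; rewrite /tilt -mulr_suml mulfV //; rewrite gt_eqF //; exact: (Zpos _ k).
Qed.

Lemma tilt_lt V (q d : 'I_V -> R) i : (forall k, 0 < q k) -> \sum_k q k = 1 ->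
  d i < \sum_k q k * d k -> tilt q d i < q i.
Proof.
move=> qp qs hd.
have Zp := Zpos d i qp.
set Z := \sum_j _ in Zp *.
have ei := expR_gt0 (d i).
have Zge : expR (d i) * (1 + \sum_k q k * d k - d i) <= Z.
  have -> : expR (d i) * (1 + \sum_k q k * d k - d i)
     = \sum_k q k * (expR (d i) * (1 + (d k - d i))).
    rewrite [RHS](eq_bigr (fun k => expR (d i) * q k + expR (d i) * (q k * d k) - expR (d i) * d i * q k));
      last by move=> k _; ring.
    rewrite !sumrB big_split /= -!mulr_sumr qs; ring.
  apply: ler_sum => k _; rewrite ler_pM2l //.
  have -> : expR (d k) = expR (d i) * expR (d k - d i) by rewrite -expRD; congr expR; ring.
  by rewrite ler_pM2l // expR_ge1Dx.
rewrite /tilt -/Z ltr_pdivrMr // ltr_pM2l //; nra.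
Qed.
End S3.
Section S4.
Variable R : realType.

Lemma p_le1 V (p : 'I_V -> R) k : (forall k, 0 < p k) -> \sum_k p k = 1 -> p k <= 1.
Proof.
move=> pp ps; rewrite -ps (bigD1 k) //= lerDl.
by apply: sumr_ge0 => l _; apply: ltW.
Qed.

Lemma main_ineq V (p g p' q : 'I_V -> R) (y i : 'I_V) (a r : R) :
  (forall k, 0 < p k) -> \sum_k p k = 1 -> i != y ->
  (forall j, j != y -> p j <= p i) ->
  0 < a * r -> `|a| <= 1/4 -> `|a| <= Cf p y i / 64 ->
  `|r| <= 1/4 -> `|r| <= Cf p y i / 64 ->
  (forall k, g k = p k - (k == y)%:R) ->
  p' = tilt p (fun k => r * g k) ->
  q = tilt p (fun k => - a * g k) ->
  tilt q (fun k => - a * (p' k - p k)) i < q i.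
Proof.
move=> pp ps iy hmax ar a1 a2 r1 r2 gE p'E qE.
have C0 := Cf_pos pp ps iy hmax.
set C := Cf p y i in a2 r2 C0.
have p1 k : p k <= 1 := p_le1 k pp ps.
have g1 k : `|g k| <= 1.
  rewrite gE ler_norml; have := pp k; have := p1 k.
  by case: (k == y) => /=; lra.
have qp : forall k, 0 < q k by rewrite qE; apply: tilt_pos.
have qs : \sum_k q k = 1 by rewrite qE; apply: (tilt_sum1 _ i).
have aa0 : 0 <= `|a| by [].
have rr0 : 0 <= `|r| by [].
have arE : a * r = `|a| * `|r| by rewrite -normrM gtr0_norm.
set u := fun k => p' k - p k.
have ub k : `|u k| <= 4 * `|r| * p k.
  rewrite /u p'E; apply: (tilt_lip pp ps) => [|l]; first by apply/andP; split.
  by rewrite normrM -[X in _ <= X]mulr1 ler_wpM2l.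
have qb k : `|q k - p k| <= 4 * `|a| * p k.
  rewrite qE; apply: (tilt_lip pp ps) => [|l]; first by apply/andP; split.
  by rewrite normrM normrN -[X in _ <= X]mulr1 ler_wpM2l.
have Xb : `|\sum_k (q k - p k) * u k| <= 16 * (`|a| * `|r|).
  apply: le_trans (ler_norm_sum _ _ _) _.
  have <- : \sum_k 16 * (`|a| * `|r|) * p k = 16 * (`|a| * `|r|).
    by rewrite -mulr_sumr ps mulr1.
  apply: ler_sum => k _; rewrite normrM.
  have := qb k; have := ub k; have := pp k; have := p1 k.
  have := normr_ge0 (q k - p k); have := normr_ge0 (u k).
  move=> n1 n2 h1 h2 h3 h4.
  have : `|q k - p k| * `|u k| <= (4 * `|a| * p k) * (4 * `|r| * p k).
    by apply: ler_pM.
  have : 16 * (`|a| * `|r|) * (p k * p k) <= 16 * (`|a| * `|r|) * p k.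
    apply: ler_wpM2l; first by apply: mulr_ge0 => //; apply: mulr_ge0.
    by rewrite -[X in _ <= X]mulr1 ler_wpM2l //; apply: ltW.
  lra.
set e := fun k => expR (r * g k).
set Z := \sum_j p j * e j.
have Zp : 0 < Z by apply: (Zpos _ i).
have Zle : Z <= 3/2.
  have hd : forall l, `|(fun k => r * g k) l| <= `|r|.
    by move=> l /=; rewrite normrM -[X in _ <= X]mulr1 ler_wpM2l.
  have /andP[_ h] := Z_bounds pp ps hd.
  apply: le_trans h _; have := expR_up (x := `|r|).
  move=> h'; have : expR `|r| <= 1 + 2 * `|r| by apply: h'; apply/andP; split => //; lra.
  lra.
set P2 := \sum_k p k ^+ 2.
have P21 : 0 <= P2 <= 1.
  apply/andP; split; first by apply: sumr_ge0 => k _; apply: sqr_ge0.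
  rewrite -ps; apply: ler_sum => k _; rewrite expr2 -[X in _ <= X]mul1r.
  by apply: ler_wpM2r; [apply: ltW | apply: p1].
set N := p i * e i - \sum_k p k ^+ 2 * e k - (p i - P2) * Z.
have uE : u i - \sum_k p k * u k = N / Z.
  have -> : \sum_k p k * u k = (\sum_k p k ^+ 2 * e k) / Z - P2.
    rewrite mulr_suml /P2 -sumrB; apply: eq_bigr => k _.
    rewrite /u p'E /tilt /e -/Z; ring.
  rewrite /u p'E /tilt /e -/Z /N /e; field; by rewrite gt_eqF.
set E := fun k => e k - 1 - r * g k.
have Eb k : 0 <= E k <= 2 * r ^+ 2.
  have h : `|r * g k| <= 1/2.
    rewrite normrM; have := g1 k; have := normr_ge0 (g k); nra.
  have /andP[h1 h2] := expR_err h.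
  apply/andP; split; first by [].
  have : 2 * (r * g k) ^+ 2 <= 2 * r ^+ 2.
    have := g1 k; rewrite ler_norml => /andP[l1 l2].
    have : g k ^+ 2 <= 1 by nra.
    move=> hg; rewrite exprMn ler_pM2l // -[X in _ <= X]mulr1 ler_wpM2l //.
    exact: sqr_ge0.
  rewrite /E /e; lra.
have S1 : \sum_k p k ^+ 2 * (p k - (k == y)%:R) = \sum_k p k ^+ 2 * g k.
  by apply: eq_bigr => k _; rewrite gE.
have S2 : \sum_k p k * (p k - (k == y)%:R) = \sum_k p k * g k.
  by apply: eq_bigr => k _; rewrite gE.
have CE : C = p i * g i - \sum_k p k ^+ 2 * g k - (p i - P2) * \sum_k p k * g k.
  by rewrite /C /Cf S1 S2 -gE.
have Se : \sum_k p k ^+ 2 * e k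
    = P2 + r * \sum_k p k ^+ 2 * g k + \sum_k p k ^+ 2 * E k.
  rewrite /P2 mulr_sumr -!big_split /=; apply: eq_bigr => k _; rewrite /E; ring.
have Ze : Z = 1 + r * \sum_k p k * g k + \sum_k p k * E k.
  rewrite /Z -ps mulr_sumr -!big_split /=; apply: eq_bigr => k _; rewrite /E; ring.
have ei : e i = 1 + r * g i + E i by rewrite /E; ring.
set X1 := p i * E i.
set X2 := \sum_k p k ^+ 2 * E k.
set X3 := \sum_k p k * E k.
set Err := X1 - X2 - (p i - P2) * X3.
have NE : N = r * C + Err.
  rewrite /N Se Ze ei CE /Err /X1 /X2 /X3.
  move: (\sum_k p k ^+ 2 * g k) (\sum_k p k * g k) (\sum_k p k ^+ 2 * E k) (\sum_k p k * E k).
  move=> s1 s2 s3 s4; ring.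
have X1b : 0 <= X1 <= 2 * r ^+ 2.
  have /andP[h1 h2] := Eb i; have := pp i; have := p1 i.
  rewrite /X1; move=> h3 h4; apply/andP; split; nra.
have X2b : 0 <= X2 <= 2 * r ^+ 2.
  apply/andP; split.
    apply: sumr_ge0 => k _; apply: mulr_ge0; [exact: sqr_ge0 | by have /andP[] := Eb k].
  have <- : \sum_k 2 * r ^+ 2 * p k = 2 * r ^+ 2 by rewrite -mulr_sumr ps mulr1.
  apply: ler_sum => k _.
  have /andP[h1 h2] := Eb k; have := pp k; have := p1 k; move=> h3 h4.
  have : p k ^+ 2 <= p k by rewrite expr2 -[X in _ <= X]mulr1 ler_wpM2l //; apply: ltW.
  have : 0 <= p k ^+ 2 by exact: sqr_ge0.
  nra.
have X3b : 0 <= X3 <= 2 * r ^+ 2.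
  apply/andP; split.
    apply: sumr_ge0 => k _; apply: mulr_ge0; [exact: ltW | by have /andP[] := Eb k].
  have <- : \sum_k 2 * r ^+ 2 * p k = 2 * r ^+ 2 by rewrite -mulr_sumr ps mulr1.
  apply: ler_sum => k _.
  have /andP[h1 h2] := Eb k; have := pp k; move=> h3.
  nra.
have Errb : `|Err| <= 6 * r ^+ 2.
  have /andP[l1 l2] := P21. have := pp i; have := p1 i; move=> h3 h4.
  have /andP[x1 x1'] := X1b. have /andP[x2 x2'] := X2b. have /andP[x3 x3'] := X3b.
  have : `|(p i - P2) * X3| <= X3.
    rewrite normrM (ger0_norm x3) -[X in _ <= X]mul1r ler_wpM2r // ler_norml.
    apply/andP; split; lra.
  rewrite /Err ler_norml => hh; move: hh; rewrite ler_norml => /andP[m1 m2].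
  apply/andP; split; lra.
have rr2 : r ^+ 2 = `|r| ^+ 2 by rewrite real_normK // num_real.
have aN : `|a| * `|r| * C - 6 * `|a| * `|r| ^+ 2 <= a * N.
  have -> : a * N = (a * r) * C + a * Err by rewrite NE; ring.
  rewrite arE.
  have : - (`|a| * `|Err|) <= a * Err.
    rewrite -normrM; have := ler_norm (- (a * Err)); rewrite normrN; lra.
  have : `|a| * `|Err| <= `|a| * (6 * r ^+ 2) by apply: ler_wpM2l.
  rewrite rr2; lra.
have aaP : 0 < `|a| * `|r| by rewrite -arE.
have C6 : 0 <= C - 6 * `|r| by lra.
have aN0 : 0 <= a * N.
  apply: le_trans aN; have -> : `|a| * `|r| * C - 6 * `|a| * `|r| ^+ 2
     = (`|a| * `|r|) * (C - 6 * `|r|) by ring.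
  by apply: mulr_ge0 => //; apply: ltW.
have aNZ : 2 / 3 * (a * N) <= a * (N / Z).
  rewrite mulrA ler_pdivlMr //. 
  have : a * N * Z <= a * N * (3/2) by apply: ler_wpM2l.
  lra.
have Sq : \sum_k q k * u k = \sum_k p k * u k + \sum_k (q k - p k) * u k.
  by rewrite -big_split /=; apply: eq_bigr => k _; ring.
have fin : 0 < a * (u i - \sum_k q k * u k).
  rewrite Sq opprD addrA uE mulrBr.
  have := ler_norm (a * \sum_k (q k - p k) * u k).
  rewrite normrM => hx.
  have : `|a| * `|\sum_k (q k - p k) * u k| <= `|a| * (16 * (`|a| * `|r|)).
    by apply: ler_wpM2l.
  have : `|a| * (16 * (`|a| * `|r|)) <= C / 64 * (16 * (`|a| * `|r|)).
    by apply: ler_wpM2r => //; apply: mulr_ge0 => //; apply: mulr_ge0.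
  have : `|a| * `|r| * (C - 6 * `|r|) >= `|a| * `|r| * (C - 6 * (C / 64)).
    by apply: ler_wpM2l; [apply: ltW | lra].
  have : 0 < `|a| * `|r| * C by apply: mulr_gt0.
  have e2 : `|a| * `|r| * C - 6 * `|a| * `|r| ^+ 2
     = (`|a| * `|r|) * (C - 6 * `|r|) by ring.
  rewrite e2 in aN.
  lra.
apply: tilt_lt => //.
rewrite -/u.
have -> : \sum_k q k * (- a * u k) = - a * \sum_k q k * u k.
  by rewrite mulr_sumr; apply: eq_bigr => k _; ring.
have -> : - a * (p' i - p i) = - a * u i by [].
move: fin; rewrite mulrBr; lra.
Qed.
End S4.
Section S5.
Variable R : realType.

Lemma sm_pos V (z : 'cV[R]_V) k : 0 < softmax z k 0.
Proof.
rewrite /softmax mxE; apply: divr_gt0; first exact: expR_gt0.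
rewrite (bigD1 k) //=; apply: ltr_pwDl; first exact: expR_gt0.
by apply: sumr_ge0 => l _; apply: expR_ge0.
Qed.

Lemma sm_sum V (z : 'cV[R]_V) (k : 'I_V) : \sum_j softmax z j 0 = 1.
Proof.
have S0 : 0 < \sum_j expR (z j 0).
  rewrite (bigD1 k) //=; apply: ltr_pwDl; first exact: expR_gt0.
  by apply: sumr_ge0 => l _; apply: expR_ge0.
rewrite (eq_bigr (fun j => expR (z j 0) / \sum_j expR (z j 0))); last by move=> j _; rewrite mxE.
by rewrite -mulr_suml mulfV // gt_eqF.
Qed.

Lemma sm_shift V (z w : 'cV[R]_V) (dl : 'I_V -> R) :
  (forall k, w k 0 = z k 0 + dl k) ->
  forall k, softmax w k 0 = tilt (fun j => softmax z j 0) dl k.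
Proof.
move=> hw k.
have S0 : 0 < \sum_j expR (z j 0).
  rewrite (bigD1 k) //=; apply: ltr_pwDl; first exact: expR_gt0.
  by apply: sumr_ge0 => l _; apply: expR_ge0.
have S1 : 0 < \sum_j expR (w j 0).
  rewrite (bigD1 k) //=; apply: ltr_pwDl; first exact: expR_gt0.
  by apply: sumr_ge0 => l _; apply: expR_ge0.
rewrite /tilt.
have -> : \sum_j softmax z j 0 * expR (dl j) = (\sum_j expR (w j 0)) / \sum_j expR (z j 0).
  rewrite mulr_suml; apply: eq_bigr => j _; rewrite mxE hw expRD; ring.
rewrite !mxE hw expRD; field.
by rewrite !gt_eqF.
Qed.

Lemma sm_ext V (z w : 'cV[R]_V) : (forall k, w k 0 = z k 0) ->
  forall k, softmax w k 0 = softmax z k 0.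
Proof.
move=> h k; rewrite !mxE h; congr (_ / _); apply: eq_bigr => j _; by rewrite h.
Qed.

Lemma mu_sum d (phi : 'cV[R]_d) : mu phi = \sum_l phi l 0 ^+ 2.
Proof. by rewrite /mu /vnorm sqr_sqrtr // sumr_ge0 // => l _; apply: sqr_ge0. Qed.

Lemma step_entry V d (M : 'M[R]_(V, d)) (phi : 'cV[R]_d) (G : 'cV[R]_V) (c : R) k :
  ((M + c *: (G *m phi^T)) *m phi) k 0 = (M *m phi) k 0 + c * mu phi * G k 0.
Proof.
have e2 : c * mu phi * G k 0 = \sum_l (c * G k 0) * phi l 0 ^+ 2.
  by rewrite -mulr_sumr mu_sum; ring.
rewrite e2 !mxE -big_split /=; apply: eq_bigr => l _.
rewrite !mxE big_ord1 !mxE; ring.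
Qed.

Lemma mnorm_outer V d (G : 'cV[R]_V) (phi : 'cV[R]_d) :
  mnorm (G *m phi^T) = vnorm G * vnorm phi.
Proof.
rewrite /mnorm /vnorm -sqrtrM; last by apply: sumr_ge0 => l _; apply: sqr_ge0.
congr Num.sqrt; rewrite mulr_suml; apply: eq_bigr => i _.
rewrite mulr_sumr; apply: eq_bigr => j _.
by rewrite !mxE big_ord1 !mxE exprMn.
Qed.

End S5.
Section S6.
Variable R : realType.

Definition Cmin V (p : 'cV[R]_V) : R :=
  \big[Num.min/1]_(y : 'I_V) \big[Num.min/1]_(i : 'I_V | (i != y) &&
     [forall j : 'I_V, (j != y) ==> (p j 0 <= p i 0)]) Cf (fun k => p k 0) y i.

Definition ccf V (p : 'cV[R]_V) : R := Num.min (1/4) (Cmin p / 64).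

Definition eta0f V (p : 'cV[R]_V) (H : 'M[R]_V) (nrm m kap : R) : R :=
  let c := ccf p in
  let e := Num.min (c / m) (c ^+ 2 * nrm ^+ 2 / (kap ^+ 2 * m + 1)) in
  if 0 < e then e else 1.

Lemma Cmin_pos V (z : 'cV[R]_V) : 0 < Cmin (softmax z).
Proof.
apply/bigmin_gtP; split => [|y _]; first lra.
apply/bigmin_gtP; split => [|i /andP[iy /forallP hf]]; first lra.
apply: Cf_pos => //.
- by move=> k; apply: sm_pos.
- exact: (sm_sum _ y).
- by move=> j jy; have := hf j; rewrite jy.
Qed.

Lemma Cmin_le V (p : 'cV[R]_V) y i : i != y -> (forall j, j != y -> p j 0 <= p i 0) ->
  Cmin p <= Cf (fun k => p k 0) y i.
Proof.
move=> iy hm; apply: le_trans (bigmin_le _ y _) _.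
apply: bigmin_le_cond; rewrite iy /=; apply/forallP => j; apply/implyP; exact: hm.
Qed.
End S6.

Lemma shift2 (R : realType) V (zS zG : 'cV[R]_V) (z0 P' P ey : 'I_V -> R) (a : R) :
  (forall k, zS k 0 = z0 k + - a * (P' k - ey k)) ->
  (forall k, zG k 0 = z0 k + - a * (P k - ey k)) ->
  forall k, softmax zS k 0 = tilt (fun j => softmax zG j 0) (fun k => - a * (P' k - P k)) k.
Proof. move=> hS hG k; apply: sm_shift => l; rewrite hS hG; ring. Qed.

Lemma ext2 (R : realType) V (zS zG : 'cV[R]_V) (z0 P' P ey : 'I_V -> R) (a : R) :
  (forall k, zS k 0 = z0 k + - a * (P' k - ey k)) ->
  (forall k, zG k 0 = z0 k + - a * (P k - ey k)) ->
  (forall k, P' k = P k) ->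
  forall k, softmax zS k 0 = softmax zG k 0.
Proof. move=> hS hG hP k; apply: sm_ext => l; by rewrite hS hG hP. Qed.

Lemma div_lt (R : realType) (x y c : R) : 0 < c -> x < y -> x / c < y / c.
Proof. by move=> c0 h; rewrite ltr_pM2r // invr_gt0. Qed.

Lemma div_eq (R : realType) (x y c : R) : x = y -> x / c = y / c.
Proof. by move=> ->. Qed.

Lemma aux_le (R : realType) (s Y X : R) : 0 <= s -> 0 <= Y -> X * (s + 1) <= s * Y -> X <= Y.
Proof. move=> h1 h2 h3; nra. Qed.
Lemma sq_le (R : realType) (x c : R) : 0 <= x -> 0 < c -> x ^+ 2 <= c ^+ 2 -> x <= c.
Proof. move=> h1 h2 h3; nra. Qed.

Unset Implicit Arguments.

Theorem corollary4 (R : realType) (V : nat) :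
  exists eta0 : 'cV[R]_V -> 'M[R]_V -> R -> R -> R -> R,
  forall (d : nat) (phi : 'cV[R]_d) (y : 'I_V) (kappa : R) (W : 'M[R]_(V, d)),
    0 < mu phi -> 0 <= kappa ->
    let p := softmax (W *m phi) in
    let g := p - onehot R y in
    let e0 := eta0 p (hessz p) (vnorm g) (mu phi) kappa in
    0 < e0 /\
    forall ystar : 'I_V, ystar != y ->
      (forall j : 'I_V, j != y -> p j 0 <= p ystar 0) ->
    forall eta rho : R,
      0 < `|eta| -> `|eta| <= 1 -> `|eta| <= e0 ->
      `|rho| = kappa * Num.sqrt `|eta| ->
      let rt := rhotilde rho (mu phi) g in
      let aGD := alpha phi W (gd_step eta phi y W) ystar in
      let aSAM := alpha phi W (sam_step eta rho phi y W) ystar in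
      (0 < eta * mu phi * rt ->
         aSAM <= aGD /\
         (0 < p ystar 0 < 1 -> rt != 0 -> aSAM < aGD)) /\
      (rt = 0 -> aSAM = aGD).
Proof.
exists (@eta0f R V).
move=> d phi y kappa W mu0 k0 p g e0.
have pp : forall k, 0 < p k 0 by move=> k; apply: sm_pos.
have ps : \sum_k p k 0 = 1 by apply: (sm_sum _ y).
have gE : forall k, g k 0 = p k 0 - (k == y)%:R by move=> k; rewrite !mxE.
have Cp : 0 < Cmin p by apply: Cmin_pos.
have cp : 0 < ccf p by rewrite /ccf lt_min; apply/andP; split; lra.
split.
  by rewrite /e0 /eta0f; case: ifP.
move=> ystar hy hmax eta rho eta0p eta1 etae0 rhoE rt aGD aSAM.
set z := W *m phi.
set a := eta * mu phi.
have vp0 : 0 <= vnorm phi by apply: sqrtr_ge0.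
have vp : 0 < vnorm phi.
  have := mu0; rewrite /mu => h; nra.
have sqmu : Num.sqrt (mu phi) = vnorm phi by rewrite /mu sqrtr_sqr ger0_norm.
set Wp := W + rho *: normalize (gradF phi y W).
have gF : gradF phi y W = g *m phi^T by [].
have Wp_entry : forall k, (Wp *m phi) k 0 = z k 0 + rt * g k 0.
  move=> k; rewrite /Wp gF /normalize mnorm_outer /rt /rhotilde.
  have vg0 : 0 <= vnorm g by apply: sqrtr_ge0.
  have [vg|vg] := eqVneq (vnorm g) 0.
    rewrite vg mul0r eqxx scaler0 addr0 mul0r; ring.
  have -> : (vnorm g * vnorm phi == 0) = false.
    by rewrite mulf_eq0 (negbTE vg) /= gt_eqF.
  rewrite scalerA step_entry -/z sqmu /mu; congr (_ + _).
  by field; rewrite vg /= gt_eqF.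
have zG_entry : forall k, (gd_step eta phi y W *m phi) k 0 = z k 0 + (- a) * (p k 0 - (k == y)%:R).
  move=> k; rewrite /gd_step -scaleNr gF step_entry -/z gE /a; ring.
have zS_entry : forall k, (sam_step eta rho phi y W *m phi) k 0
    = z k 0 + (- a) * (softmax (Wp *m phi) k 0 - (k == y)%:R).
  move=> k; rewrite /sam_step -/Wp -scaleNr /gradF step_entry -/z /a !mxE; ring.
split.
  move=> arp.
  have rt0 : rt != 0 by apply: contraTneq arp => ->; rewrite mulr0 ltxx.
  have vg : vnorm g != 0.
    by apply: contraNneq rt0; rewrite /rt /rhotilde => ->; rewrite eqxx.
  have vg0 : 0 < vnorm g by rewrite lt_neqAle eq_sym vg /=; apply: sqrtr_ge0.
  have rtE : rt = rho * vnorm phi / vnorm g.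
    by rewrite /rt /rhotilde (negbTE vg) sqmu.
  set c := ccf p.
  set e := Num.min (c / mu phi) (c ^+ 2 * vnorm g ^+ 2 / (kappa ^+ 2 * mu phi + 1)).
  have ep : 0 < e.
    rewrite /e lt_min; apply/andP; split; first exact: divr_gt0.
    apply: divr_gt0; first by apply: mulr_gt0; apply: exprn_gt0.
    have : 0 <= kappa ^+ 2 * mu phi by apply: mulr_ge0; [apply: sqr_ge0 | apply: ltW].
    lra.
  have e0E : e0 = e by rewrite /e0 /eta0f -/c -/e ep.
  rewrite e0E in etae0.
  have c14 : c <= 1/4 by rewrite /c /ccf ge_min lexx.
  have cC : c <= Cf (fun k => p k 0) y ystar / 64.
    apply: le_trans (_ : Cmin p / 64 <= _).
      by rewrite /c /ccf ge_min lexx orbT.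
    by apply: ler_wpM2r; [lra | exact: Cmin_le hy hmax].
  have aB : `|a| <= c.
    have : e <= c / mu phi by rewrite /e ge_min lexx.
    rewrite /a normrM (gtr0_norm mu0) ler_pdivlMr // => h.
    have : `|eta| * mu phi <= e * mu phi by rewrite ler_pM2r.
    lra.
  have rB : `|rt| <= c.
    have : e <= c ^+ 2 * vnorm g ^+ 2 / (kappa ^+ 2 * mu phi + 1) by rewrite /e ge_min lexx orbT.
    have kp : 0 < kappa ^+ 2 * mu phi + 1.
      have : 0 <= kappa ^+ 2 * mu phi by apply: mulr_ge0; [apply: sqr_ge0 | apply: ltW].
      lra.
    rewrite ler_pdivlMr // => h.
    have rt2 : `|rt| ^+ 2 * vnorm g ^+ 2 = kappa ^+ 2 * `|eta| * mu phi.
      rewrite -normrX rtE /mu.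
      have -> : (rho * vnorm phi / vnorm g) ^+ 2 = rho ^+ 2 * vnorm phi ^+ 2 / vnorm g ^+ 2.
        by field.
      rewrite ger0_norm; last by apply: divr_ge0; [apply: mulr_ge0; apply: sqr_ge0 | apply: sqr_ge0].
      rewrite -[rho ^+ 2]real_normK ?num_real // rhoE exprMn sqr_sqrtr //.
      by field.
    have h2 : kappa ^+ 2 * `|eta| * mu phi * (kappa ^+ 2 * mu phi + 1)
        <= kappa ^+ 2 * mu phi * (c ^+ 2 * vnorm g ^+ 2).
      have : kappa ^+ 2 * `|eta| * mu phi * (kappa ^+ 2 * mu phi + 1)
          <= kappa ^+ 2 * mu phi * (e * (kappa ^+ 2 * mu phi + 1)).
        have -> : kappa ^+ 2 * `|eta| * mu phi * (kappa ^+ 2 * mu phi + 1)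
          = kappa ^+ 2 * mu phi * (`|eta| * (kappa ^+ 2 * mu phi + 1)) by ring.
        apply: ler_wpM2l; first by apply: mulr_ge0; [apply: sqr_ge0 | apply: ltW].
        by apply: ler_wpM2r => //; apply: ltW.
      move=> h3; apply: le_trans h3 _; apply: ler_wpM2l => //.
      by apply: mulr_ge0; [apply: sqr_ge0 | apply: ltW].
    have h4 : `|rt| ^+ 2 <= c ^+ 2.
      have vg2 : 0 < vnorm g ^+ 2 by apply: exprn_gt0.
      rewrite -(ler_pM2r vg2) rt2.
      have k2 : 0 <= kappa ^+ 2 * mu phi by apply: mulr_ge0; [apply: sqr_ge0 | apply: ltW].
      have c2 : 0 <= c ^+ 2 * vnorm g ^+ 2 by apply: mulr_ge0; apply: sqr_ge0.
      have eqX : kappa ^+ 2 * `|eta| * mu phi * (kappa ^+ 2 * mu phi + 1)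
        = (kappa ^+ 2 * mu phi * `|eta|) * (kappa ^+ 2 * mu phi + 1) by ring.
      have eqY : kappa ^+ 2 * `|eta| * mu phi = kappa ^+ 2 * mu phi * `|eta| by ring.
      rewrite eqX in h2; rewrite eqY.
      exact: aux_le k2 c2 h2.
    exact: sq_le (normr_ge0 _) cp h4.
  have main := @main_ineq R V (fun k => p k 0) (fun k => p k 0 - (k == y)%:R)
    (fun k => softmax (Wp *m phi) k 0) (fun k => softmax (gd_step eta phi y W *m phi) k 0)
    y ystar a rt pp ps hy hmax.
  have arp' : 0 < a * rt by [].
  have := main arp' (le_trans aB c14) (le_trans aB cC) (le_trans rB c14) (le_trans rB cC)
    (fun k => erefl).
  have p'E : (fun k => softmax (Wp *m phi) k 0) = tilt (fun k => p k 0) (fun k => rt * (p k 0 - (k == y)%:R)).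
    apply: funext => x; apply: sm_shift => l; by rewrite Wp_entry gE.
  have qE : (fun k => softmax (gd_step eta phi y W *m phi) k 0)
      = tilt (fun k => p k 0) (fun k => - a * (p k 0 - (k == y)%:R)).
    apply: funext => x; apply: sm_shift => l; by rewrite zG_entry.
  move=> /(_ p'E qE) hlt.
  have sS := shift2 zS_entry zG_entry ystar.
  have hlt' : softmax (sam_step eta rho phi y W *m phi) ystar 0
            < softmax (gd_step eta phi y W *m phi) ystar 0.
    by move: hlt; rewrite -sS.
  have strict : aSAM < aGD by apply: div_lt.
  by split => [|_ _]; [apply: ltW|].
move=> rt0.
have hP : forall k, softmax (Wp *m phi) k 0 = p k 0.
  apply: sm_ext => l; apply: (eq_trans (Wp_entry l)).
  by rewrite rt0 mul0r addr0.
rewrite /aSAM /aGD /alpha; apply: div_eq.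
exact: (ext2 zS_entry zG_entry hP ystar).
Qed.
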